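(* Let $K\subset\mathbb E$ be a regular cone and $F$ a normal barrier for $K$ with negative curvature. Then for every $x\in\operatorname{int}K$ and every $h\in K$, $$\nabla^2F(x)h\in K^*\qquad\text{and}\qquad \nabla F(x+h)-\nabla F(x)\in K^*.$$
   Context: $\mathbb E$ finite-dimensional real space, dual $\mathbb E^*$, pairing $\langle\cdot,\cdot\rangle$. $K$ regular: closed, convex, pointed, nonempty interior; $K^*=\{s\in\mathbb E^*:\langle s,x\rangle\ge0\ \forall x\in K\}$. A normal barrier for $K$ is a self-concordant barrier $F$ on $\operatorname{int}K$ with $F(\tau x)=F(x)-\nu\ln\tau$ for all $\tau>0$. $F$ has negative curvature if $D^3F(x)[h,u,u]\le0$ for all $x\in\operatorname{int}K$, $h\in K$, $u\in\mathbb E$. *)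

(* Defs.v *)
From Stdlib Require Fin.
From Stdlib Require Import Reals.
Open Scope R_scope.

(* E = R^n, vectors are functions Fin.t n -> R.  The dual E^* is modelled
   literally as the linear functionals E -> R, and the pairing <s,x> is s x. *)
Definition vec (n : nat) := Fin.t n -> R.

Definition vadd {n} (x y : vec n) : vec n := fun i => x i + y i.
Definition vscal {n} (a : R) (x : vec n) : vec n := fun i => a * x i.
Definition vopp {n} (x : vec n) : vec n := fun i => - x i.
Definition vzero {n} : vec n := fun _ => 0.

(* Topology of R^n (sup-norm balls; all norms are equivalent). *)
Definition near {n} (x y : vec n) (r : R) : Prop := forall i, Rabs (y i - x i) < r.

Definition int_set {n} (K : vec n -> Prop) (x : vec n) : Prop :=
  exists r, 0 < r /\ forall y, near x y r -> K y.

Definition seq_cv {n} (xs : nat -> vec n) (b : vec n) : Prop :=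
  forall i, Un_cv (fun k => xs k i) (b i).

Definition closed_set {n} (K : vec n -> Prop) : Prop :=
  forall xs b, (forall k, K (xs k)) -> seq_cv xs b -> K b.

Definition convex_set {n} (K : vec n -> Prop) : Prop :=
  forall x y l, K x -> K y -> 0 <= l <= 1 -> K (vadd (vscal l x) (vscal (1 - l) y)).

Definition is_cone {n} (K : vec n -> Prop) : Prop :=
  forall x t, K x -> 0 <= t -> K (vscal t x).

Definition pointed {n} (K : vec n -> Prop) : Prop :=
  forall x, K x -> K (vopp x) -> x = vzero.

Definition regular_cone {n} (K : vec n -> Prop) : Prop :=
  is_cone K /\ closed_set K /\ convex_set K /\ pointed K /\ exists x, int_set K x.

Definition linear_form {n} (s : vec n -> R) : Prop :=
  forall x y a b, s (vadd (vscal a x) (vscal b y)) = a * s x + b * s y.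

Definition in_dual_cone {n} (K : vec n -> Prop) (s : vec n -> R) : Prop :=
  linear_form s /\ forall x, K x -> 0 <= s x.

Definition cont_on {n} (U : vec n -> Prop) (f : vec n -> R) : Prop :=
  forall x, U x -> forall eps, 0 < eps ->
    exists del, 0 < del /\ forall y, U y -> near x y del -> Rabs (f y - f x) < eps.

(* DF x h = DF(x)[h],  D2F x h u = D^2F(x)[h,u],  D3F x h u v = D^3F(x)[h,u,v]:
   F is C^3 on the open set U with these (multilinear, continuous) derivatives. *)
Definition C3_on {n} (U : vec n -> Prop) (F : vec n -> R)
    (DF : vec n -> vec n -> R) (D2F : vec n -> vec n -> vec n -> R)
    (D3F : vec n -> vec n -> vec n -> vec n -> R) : Prop :=
  (forall x h, U x ->
     derivable_pt_lim (fun t => F (vadd x (vscal t h))) 0 (DF x h)) /\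
  (forall x h u, U x ->
     derivable_pt_lim (fun t => DF (vadd x (vscal t h)) u) 0 (D2F x h u)) /\
  (forall x h u v, U x ->
     derivable_pt_lim (fun t => D2F (vadd x (vscal t h)) u v) 0 (D3F x h u v)) /\
  cont_on U F /\
  (forall h, cont_on U (fun x => DF x h)) /\
  (forall h u, cont_on U (fun x => D2F x h u)) /\
  (forall h u v, cont_on U (fun x => D3F x h u v)) /\
  (forall x, U x ->
     linear_form (DF x) /\
     (forall u, linear_form (fun h => D2F x h u)) /\
     (forall h, linear_form (D2F x h)) /\
     (forall u v, linear_form (fun h => D3F x h u v)) /\
     (forall h v, linear_form (fun u => D3F x h u v)) /\
     (forall h u, linear_form (D3F x h u))).

Definition convex_fun_on {n} (U : vec n -> Prop) (F : vec n -> R) : Prop :=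
  forall x y l, U x -> U y -> 0 <= l <= 1 ->
    F (vadd (vscal l x) (vscal (1 - l) y)) <= l * F x + (1 - l) * F y.

Definition self_concordant_barrier {n} (K : vec n -> Prop) (F : vec n -> R)
    DF D2F D3F : Prop :=
  C3_on (int_set K) F DF D2F D3F /\
  convex_fun_on (int_set K) F /\
  (forall xs b, (forall k, int_set K (xs k)) -> seq_cv xs b -> ~ int_set K b ->
     cv_infty (fun k => F (xs k))) /\
  (forall x u, int_set K x ->
     Rabs (D3F x u u u) <= 2 * (D2F x u u * sqrt (D2F x u u))) /\
  (exists theta, forall x u, int_set K x -> (DF x u) ^ 2 <= theta * D2F x u u).

Definition normal_barrier {n} (K : vec n -> Prop) (F : vec n -> R) (nu : R)
    DF D2F D3F : Prop :=
  self_concordant_barrier K F DF D2F D3F /\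
  forall x tau, int_set K x -> 0 < tau -> F (vscal tau x) = F x - nu * ln tau.

Definition negative_curvature {n} (K : vec n -> Prop)
    (D3F : vec n -> vec n -> vec n -> vec n -> R) : Prop :=
  forall x h u, int_set K x -> K h -> D3F x h u u <= 0.

(* Main.v *)
Require Import Defs.
From Stdlib Require Import Reals Lra Psatz FunctionalExtensionality.
From Stdlib Require Fin.
Open Scope R_scope.

Ltac vext := apply functional_extensionality; intro; unfold vadd, vscal; ring.

Lemma vbound {n} (a : vec n) : exists M, 0 <= M /\ forall i, Rabs (a i) <= M.
Proof.
  induction n as [|n IH].
  - exists 0; split; [lra|]. intro i. apply (Fin.case0 (fun _ => _) i).
  - destruct (IH (fun j => a (Fin.FS j))) as [M [HM0 HM]].
    exists (Rmax M (Rabs (a Fin.F1))). split.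
    + apply Rle_trans with M; [lra | apply Rmax_l].
    + intro i. apply (Fin.caseS' i).
      * apply Rmax_r.
      * intro j. apply Rle_trans with M; [apply HM | apply Rmax_l].
Qed.

Definition Uopen {n} (U : vec n -> Prop) :=
  forall z, U z -> exists r, 0 < r /\ forall y, near z y r -> U y.

Lemma int_open {n} (K : vec n -> Prop) : Uopen (int_set K).
Proof.
  intros z [r [Hr HK]]. exists (r/2). split; [lra|].
  intros y Hy. exists (r/2). split; [lra|]. intros w Hw. apply HK.
  intro i. specialize (Hy i). specialize (Hw i).
  replace (w i - z i) with ((w i - y i) + (y i - z i)) by ring.
  eapply Rle_lt_trans; [apply Rabs_triang|]. lra.
Qed.

Lemma small_line {n} (U : vec n -> Prop) : Uopen U ->
  forall z d, U z -> exists e, 0 < e /\ forall t, Rabs t < e -> U (vadd z (vscal t d)).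
Proof.
  intros HU z d Hz. destruct (HU z Hz) as [r [Hr Hb]].
  destruct (vbound d) as [M [HM0 HM]].
  exists (r / (M + 1)). split.
  { apply Rdiv_lt_0_compat; lra. }
  intros t Ht. apply Hb. intro i. unfold vadd, vscal.
  replace (z i + t * d i - z i) with (t * d i) by ring.
  rewrite Rabs_mult. specialize (HM i).
  assert (Rabs t * (M+1) < r).
  { apply Rmult_lt_reg_r with (/ (M+1)). apply Rinv_0_lt_compat; lra.
    rewrite Rmult_assoc, Rinv_r by lra. unfold Rdiv in Ht. lra. }
  pose proof (Rabs_pos t). pose proof (Rabs_pos (d i)). nra.
Qed.

Lemma deriv_line {n} (phi : vec n -> R) (Q : R -> vec n) (d : vec n) s0 l :
  (forall s, Q s = vadd (Q s0) (vscal (s - s0) d)) ->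
  derivable_pt_lim (fun t => phi (vadd (Q s0) (vscal t d))) 0 l ->
  derivable_pt_lim (fun s => phi (Q s)) s0 l.
Proof.
  intros HQ H eps Heps. destruct (H eps Heps) as [del Hd]. exists del.
  intros h Hh Hhl.
  assert (E : forall s, phi (Q s) = (fun t => phi (vadd (Q s0) (vscal t d))) (s - s0)).
  { intro s. cbv beta. rewrite <- (HQ s). reflexivity. }
  cbv beta. rewrite (E (s0 + h)), (E s0).
  replace (s0 + h - s0) with (0 + h) by ring. replace (s0 - s0) with 0 by ring.
  apply Hd; assumption.
Qed.

Lemma deriv_agree {n} (U : vec n -> Prop) (f1 f2 : vec n -> R) z d l1 l2 :
  Uopen U -> (forall w, U w -> f1 w = f2 w) -> U z ->
  derivable_pt_lim (fun t => f1 (vadd z (vscal t d))) 0 l1 ->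
  derivable_pt_lim (fun t => f2 (vadd z (vscal t d))) 0 l2 -> l1 = l2.
Proof.
  intros HU Hf Hz H1 H2.
  destruct (small_line U HU z d Hz) as [e [He Hl]].
  apply (uniqueness_limite (fun t => f2 (vadd z (vscal t d))) 0); [|exact H2].
  intros eps Heps. destruct (H1 eps Heps) as [del Hd].
  assert (Hm : 0 < Rmin del e) by (apply Rmin_pos; [apply cond_pos | lra]).
  exists (mkposreal _ Hm). intros h Hh Hhl. simpl in Hhl.
  cbv beta. rewrite <- !Hf.
  - apply Hd; auto. apply Rlt_le_trans with (1 := Hhl). apply Rmin_l.
  - apply Hl. rewrite Rabs_R0. lra.
  - apply Hl. replace (0+h) with h by ring. apply Rlt_le_trans with (1 := Hhl). apply Rmin_r.
Qed.

Lemma schwarz {n} (U : vec n -> Prop) (phi : vec n -> R) (psi : vec n -> vec n -> R)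
  (chi : vec n -> vec n -> vec n -> R) :
  Uopen U ->
  (forall z a, U z -> derivable_pt_lim (fun t => phi (vadd z (vscal t a))) 0 (psi z a)) ->
  (forall z a b, U z -> derivable_pt_lim (fun t => psi (vadd z (vscal t a)) b) 0 (chi z a b)) ->
  (forall a b, cont_on U (fun z => chi z a b)) ->
  forall z a b, U z -> chi z a b = chi z b a.
Proof.
  intros HU H1 H2 Hc z a b Hz.
  destruct (HU z Hz) as [r [Hr Hb]].
  destruct (vbound a) as [Ma [Ma0 HMa]].
  destruct (vbound b) as [Mb [Mb0 HMb]].
  set (P := fun s t => vadd (vadd z (vscal s a)) (vscal t b)).
  assert (Hnear : forall m rho s t, 0 < rho -> rho * (Ma + Mb + 1) <= m ->
            0 <= s <= rho -> 0 <= t <= rho -> near z (P s t) m).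
  { intros m rho s t Hrho Hm Hs Ht i. unfold P, vadd, vscal.
    replace (z i + s * a i + t * b i - z i) with (s * a i + t * b i) by ring.
    eapply Rle_lt_trans; [apply Rabs_triang|]. rewrite !Rabs_mult.
    rewrite (Rabs_right s) by lra. rewrite (Rabs_right t) by lra.
    specialize (HMa i). specialize (HMb i).
    pose proof (Rabs_pos (a i)). pose proof (Rabs_pos (b i)). nra. }
  assert (key : forall eps, 0 < eps -> Rabs (chi z a b - chi z b a) < 2 * eps).
  { intros eps Heps.
    destruct (Hc b a z Hz eps Heps) as [d1 [Hd1 Hc1]].
    destruct (Hc a b z Hz eps Heps) as [d2 [Hd2 Hc2]].
    set (m := Rmin r (Rmin d1 d2)).
    assert (Hm : 0 < m) by (unfold m; repeat apply Rmin_pos; lra).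
    set (rho := m / (Ma + Mb + 1)).
    assert (Hrho : 0 < rho) by (unfold rho; apply Rdiv_lt_0_compat; lra).
    assert (Hrm : rho * (Ma + Mb + 1) <= m).
    { unfold rho. right. field. lra. }
    assert (Hmr : m <= r) by apply Rmin_l.
    assert (Hm1 : m <= d1) by (eapply Rle_trans; [apply Rmin_r | apply Rmin_l]).
    assert (Hm2 : m <= d2) by (eapply Rle_trans; [apply Rmin_r | apply Rmin_r]).
    assert (HU' : forall s t, 0 <= s <= rho -> 0 <= t <= rho -> U (P s t)).
    { intros s t Hs Ht. apply Hb. intro i.
      eapply Rlt_le_trans; [apply (Hnear m rho s t); auto|lra]. }
    assert (HN1 : forall s t, 0 <= s <= rho -> 0 <= t <= rho -> near z (P s t) d1).
    { intros s t Hs Ht i. eapply Rlt_le_trans; [apply (Hnear m rho s t); auto|lra]. }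
    assert (HN2 : forall s t, 0 <= s <= rho -> 0 <= t <= rho -> near z (P s t) d2).
    { intros s t Hs Ht i. eapply Rlt_le_trans; [apply (Hnear m rho s t); auto|lra]. }
    assert (Ds : forall f g t s0, (forall w, U w -> derivable_pt_lim (fun x => f (vadd w (vscal x a))) 0 (g w)) ->
              0 <= s0 <= rho -> 0 <= t <= rho ->
              derivable_pt_lim (fun s => f (P s t)) s0 (g (P s0 t))).
    { intros f g t s0 Hf Hs Ht. apply (deriv_line f (fun s => P s t) a s0).
      - intro s. unfold P. vext.
      - apply Hf. apply HU'; auto. }
    assert (Dt : forall f g s t0, (forall w, U w -> derivable_pt_lim (fun x => f (vadd w (vscal x b))) 0 (g w)) ->
              0 <= s <= rho -> 0 <= t0 <= rho ->
              derivable_pt_lim (fun t => f (P s t)) t0 (g (P s t0))).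
    { intros f g s t0 Hf Hs Ht. apply (deriv_line f (fun t => P s t) b t0).
      - intro t. unfold P. vext.
      - apply Hf. apply HU'; auto. }
    destruct (MVT_cor2 (fun x => phi (P x rho) - phi (P x 0))
                (fun x => psi (P x rho) a - psi (P x 0) a) 0 rho Hrho) as [xi [e1 Hxi]].
    { intros c Hc'. apply (derivable_pt_lim_minus (fun x => phi (P x rho)) (fun x => phi (P x 0))).
      - apply (Ds phi (fun w => psi w a)); try lra; intros; apply H1; auto.
      - apply (Ds phi (fun w => psi w a)); try lra; intros; apply H1; auto. }
    destruct (MVT_cor2 (fun t => psi (P xi t) a) (fun t => chi (P xi t) b a) 0 rho Hrho)
      as [eta [e2 Heta]].
    { intros c Hc'. apply (Dt (fun w => psi w a) (fun w => chi w b a)); try lra.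
      intros; apply H2; auto. }
    destruct (MVT_cor2 (fun t => phi (P rho t) - phi (P 0 t))
                (fun t => psi (P rho t) b - psi (P 0 t) b) 0 rho Hrho) as [eta' [e3 Heta']].
    { intros c Hc'. apply (derivable_pt_lim_minus (fun t => phi (P rho t)) (fun t => phi (P 0 t))).
      - apply (Dt phi (fun w => psi w b)); try lra; intros; apply H1; auto.
      - apply (Dt phi (fun w => psi w b)); try lra; intros; apply H1; auto. }
    destruct (MVT_cor2 (fun s => psi (P s eta') b) (fun s => chi (P s eta') a b) 0 rho Hrho)
      as [xi' [e4 Hxi']].
    { intros c Hc'. apply (Ds (fun w => psi w b) (fun w => chi w a b)); try lra.
      intros; apply H2; auto. }
    cbv beta in e1, e2, e3, e4.
    assert (Eq : chi (P xi eta) b a = chi (P xi' eta') a b).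
    { assert (chi (P xi eta) b a * (rho * rho) = chi (P xi' eta') a b * (rho * rho)) by nra.
      apply Rmult_eq_reg_r with (rho * rho); [assumption | nra]. }
    assert (C1 := Hc1 (P xi eta) ltac:(apply HU'; lra) ltac:(apply HN1; lra)).
    assert (C2 := Hc2 (P xi' eta') ltac:(apply HU'; lra) ltac:(apply HN2; lra)).
    cbv beta in C1, C2. rewrite Eq in C1.
    revert C1 C2. unfold Rabs; repeat destruct Rcase_abs; intros; lra. }
  destruct (Req_dec (chi z a b) (chi z b a)) as [E|E]; [exact E|].
  exfalso. set (dd := Rabs (chi z a b - chi z b a)).
  assert (0 < dd) by (apply Rabs_pos_lt; lra).
  specialize (key (dd/4)). assert (dd < 2 * (dd/4)) by (apply key; lra). lra.
Qed.

Lemma K_add {n} (K : vec n -> Prop) a b :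
  is_cone K -> convex_set K -> K a -> K b -> K (vadd a b).
Proof.
  intros Hc Hv Ha Hb.
  assert (H := Hc _ 2 (Hv a b (1/2) Ha Hb ltac:(lra)) ltac:(lra)).
  replace (vadd a b) with (vscal 2 (vadd (vscal (1/2) a) (vscal (1 - 1/2) b))); auto.
  apply functional_extensionality; intro; unfold vadd, vscal; field.
Qed.

Lemma ray_int {n} (K : vec n -> Prop) x h t :
  is_cone K -> convex_set K -> int_set K x -> K h -> 0 <= t ->
  int_set K (vadd x (vscal t h)).
Proof.
  intros Hc Hv [r [Hr HK]] Hh Ht. exists r. split; auto. intros y Hy.
  replace y with (vadd (vadd y (vscal (-t) h)) (vscal t h)) by vext.
  apply K_add; auto.
  apply HK. intro i. specialize (Hy i). unfold vadd, vscal in *.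
  replace (y i + - t * h i - x i) with (y i - (x i + t * h i)) by ring. auto.
Qed.

Lemma hess_psd {n} (K : vec n -> Prop) F DF D2F :
  (forall x h, int_set K x -> derivable_pt_lim (fun t => F (vadd x (vscal t h))) 0 (DF x h)) ->
  (forall x h u, int_set K x -> derivable_pt_lim (fun t => DF (vadd x (vscal t h)) u) 0 (D2F x h u)) ->
  convex_fun_on (int_set K) F ->
  forall y u, int_set K y -> 0 <= D2F y u u.
Proof.
  intros D1 D2 Hconv y u Hy.
  destruct (small_line _ (int_open K) y u Hy) as [e [He Hl]].
  set (Q := fun t => vadd y (vscal t u)).
  destruct (Rle_or_lt 0 (D2F y u u)) as [|Hc]; [assumption|exfalso].
  set (c := D2F y u u) in *.
  destruct (D2 y u u Hy (-c/2) ltac:(lra)) as [del Hd].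
  set (ep := Rmin del e / 2).
  assert (Hep : 0 < ep) by (unfold ep; pose proof (Rmin_pos del e (cond_pos del) He); lra).
  assert (Hep1 : ep < del) by (unfold ep; pose proof (Rmin_l del e); pose proof (cond_pos del); lra).
  assert (Hep2 : ep < e) by (unfold ep; pose proof (Rmin_r del e); pose proof (Rmin_pos del e (cond_pos del) He); lra).
  assert (Df : forall t, Rabs t < e -> derivable_pt_lim (fun s => F (Q s)) t (DF (Q t) u)).
  { intros t Ht. apply (deriv_line F Q u t).
    - intro s. unfold Q. vext.
    - apply D1. apply Hl. auto. }
  destruct (MVT_cor2 (fun s => F (Q s)) (fun s => DF (Q s) u) 0 ep Hep) as [x1 [e1 H1]].
  { intros t Ht. apply Df. unfold Rabs; destruct Rcase_abs; lra. }
  destruct (MVT_cor2 (fun s => F (Q s)) (fun s => DF (Q s) u) (-ep) 0 ltac:(lra)) as [x2 [e2 H2]].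
  { intros t Ht. apply Df. unfold Rabs; destruct Rcase_abs; lra. }
  assert (A1 := Hd x1 ltac:(intro; lra) ltac:(unfold Rabs; destruct Rcase_abs; lra)).
  assert (A2 := Hd x2 ltac:(intro; lra) ltac:(unfold Rabs; destruct Rcase_abs; lra)).
  cbv beta in *. replace (0 + x1) with x1 in A1 by ring. replace (0 + x2) with x2 in A2 by ring.
  set (q1 := (DF (vadd y (vscal x1 u)) u - DF (vadd y (vscal 0 u)) u) / x1) in A1.
  set (q2 := (DF (vadd y (vscal x2 u)) u - DF (vadd y (vscal 0 u)) u) / x2) in A2.
  assert (E1 : DF (vadd y (vscal x1 u)) u - DF (vadd y (vscal 0 u)) u = x1 * q1) by (unfold q1; field; lra).
  assert (E2 : DF (vadd y (vscal x2 u)) u - DF (vadd y (vscal 0 u)) u = x2 * q2) by (unfold q2; field; lra).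
  assert (B1 : q1 < 0) by (apply Rabs_def2 in A1; unfold c in *; lra).
  assert (B2 : q2 < 0) by (apply Rabs_def2 in A2; unfold c in *; lra).
  assert (Cv := Hconv (Q ep) (Q (-ep)) (1/2) ltac:(apply Hl; unfold Rabs; destruct Rcase_abs; lra)
                 ltac:(apply Hl; unfold Rabs; destruct Rcase_abs; lra) ltac:(lra)).
  replace (vadd (vscal (1/2) (Q ep)) (vscal (1 - 1/2) (Q (-ep)))) with (Q 0) in Cv
    by (unfold Q; apply functional_extensionality; intro; unfold vadd, vscal; field).
  unfold Q in *.
  assert (x1 * q1 < 0) by nra. assert (0 < x2 * q2) by nra.
  assert (0 < (DF (vadd y (vscal x2 u)) u - DF (vadd y (vscal x1 u)) u) * ep) by (apply Rmult_lt_0_compat; lra).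
  nra.
Qed.

Theorem mainTheorem16 (n : nat) (K : vec n -> Prop) (F : vec n -> R) (nu : R)
    (DF : vec n -> vec n -> R) (D2F : vec n -> vec n -> vec n -> R)
    (D3F : vec n -> vec n -> vec n -> vec n -> R) :
  regular_cone K ->
  normal_barrier K F nu DF D2F D3F ->
  negative_curvature K D3F ->
  forall x h : vec n, int_set K x -> K h ->
    in_dual_cone K (fun u => D2F x h u) /\
    in_dual_cone K (fun u => DF (vadd x h) u - DF x u).
Proof.
  intros [Hcone [_ [Hcvx _]]] [[HC3 [Hconv [_ [_ [theta Htheta]]]]] _] Hneg.
  destruct HC3 as [D1 [D2 [D3 [_ [_ [cD2 [cD3 Hlin]]]]]]].
  assert (Uo := int_open K).
  assert (sym2 : forall z a b, int_set K z -> D2F z a b = D2F z b a).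
  { apply (schwarz (int_set K) F DF D2F Uo D1 D2 cD2). }
  assert (sym3 : forall z a b c, int_set K z -> D3F z a b c = D3F z b a c).
  { intros z a b c. apply (schwarz (int_set K) (fun w => DF w c) (fun w a => D2F w a c)
       (fun w a b => D3F w a b c) Uo).
    - intros; apply D2; auto.
    - intros; apply D3; auto.
    - intros; apply cD3. }
  assert (d3s : forall w h u, int_set K w -> D3F w h h u = D3F w u h h).
  { intros w h0 u Hw. rewrite <- (sym3 w h0 u h0 Hw).
    apply (deriv_agree (int_set K) (fun w => D2F w h0 u) (fun w => D2F w u h0) w h0).
    all: try assumption.
    - intros; apply sym2; auto.
    - apply D3; auto.
    - apply D3; auto. }
  assert (psd := hess_psd K F DF D2F D1 D2 Hconv).
  assert (A : forall x h u, int_set K x -> K h -> K u -> 0 <= D2F x h u).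
  { intros y k u Hy Hk Hu.
    set (Q := fun t => vadd y (vscal t k)).
    assert (HQ : forall t, 0 <= t -> int_set K (Q t)) by (intros; apply ray_int; auto).
    assert (Q0 : Q 0 = y) by (unfold Q; vext).
    rewrite <- Q0.
    destruct (Rle_or_lt 0 (D2F (Q 0) k u)) as [H0|Hc]; [exact H0|exfalso].
    set (c := D2F (Q 0) k u) in *.
    assert (Dl : forall (f : vec n -> R) g t, 0 <= t ->
        (forall w, int_set K w -> derivable_pt_lim (fun s => f (vadd w (vscal s k))) 0 (g w)) ->
        derivable_pt_lim (fun s => f (Q s)) t (g (Q t))).
    { intros f g t Ht Hf. apply (deriv_line f Q k t).
      - intro s; unfold Q; vext.
      - apply Hf; apply HQ; lra. }
    assert (Kk : forall t, 0 < t -> D2F (Q t) k u <= c).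
    { intros t Ht.
      destruct (MVT_cor2 (fun s => D2F (Q s) k u) (fun s => D3F (Q s) k k u) 0 t Ht) as [xi [e1 Hxi]].
      { intros a Ha. apply (Dl (fun w => D2F w k u) (fun w => D3F w k k u)); [lra|].
        intros; apply D3; auto. }
      cbv beta in e1. rewrite d3s in e1 by (apply HQ; lra).
      assert (D3F (Q xi) u k k <= 0) by (apply Hneg; auto; apply HQ; lra).
      unfold c. nra. }
    assert (Kg : forall t, 0 < t -> DF (Q t) u <= DF (Q 0) u + c * t).
    { intros t Ht.
      destruct (MVT_cor2 (fun s => DF (Q s) u) (fun s => D2F (Q s) k u) 0 t Ht) as [xi [e1 Hxi]].
      { intros a Ha. apply (Dl (fun w => DF w u) (fun w => D2F w k u)); [lra|].
        intros; apply D2; auto. }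
      cbv beta in e1. assert (D2F (Q xi) k u <= c) by (apply Kk; lra). nra. }
    assert (Kp : forall t, 0 < t -> D2F (Q t) u u <= D2F (Q 0) u u).
    { intros t Ht.
      destruct (MVT_cor2 (fun s => D2F (Q s) u u) (fun s => D3F (Q s) k u u) 0 t Ht) as [xi [e1 Hxi]].
      { intros a Ha. apply (Dl (fun w => D2F w u u) (fun w => D3F w k u u)); [lra|].
        intros; apply D3; auto. }
      cbv beta in e1.
      assert (D3F (Q xi) k u u <= 0) by (apply Hneg; auto; apply HQ; lra). nra. }
    set (M := Rabs theta * D2F (Q 0) u u).
    assert (HM : 0 <= M) by (apply Rmult_le_pos; [apply Rabs_pos | apply psd; apply HQ; lra]).
    set (g0 := DF (Q 0) u).
    set (t := (Rabs g0 + M + 1) / (- c)).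
    assert (Ht : 0 < t) by (unfold t; apply Rdiv_lt_0_compat; pose proof (Rabs_pos g0); lra).
    assert (Ct : c * t = - (Rabs g0 + M + 1)) by (unfold t; field; lra).
    assert (G1 := Kg t Ht). fold g0 in G1.
    assert (G2 := Htheta (Q t) u (HQ t ltac:(lra))).
    assert (P1 := Kp t Ht). assert (P0 := psd (Q t) u (HQ t ltac:(lra))).
    assert (theta * D2F (Q t) u u <= M).
    { unfold M. apply Rle_trans with (Rabs theta * D2F (Q t) u u).
      - apply Rmult_le_compat_r; [assumption | apply RRle_abs].
      - apply Rmult_le_compat_l; [apply Rabs_pos | assumption]. }
    pose proof (Rle_abs g0). pose proof (Rabs_pos g0).
    assert (DF (Q t) u <= - (M + 1)) by lra.
    nra. }
  intros x h Hx Hh.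
  set (Q := fun t => vadd x (vscal t h)).
  assert (HQ : forall t, 0 <= t -> int_set K (Q t)) by (intros; apply ray_int; auto).
  assert (Q0 : Q 0 = x) by (unfold Q; vext).
  assert (Q1 : Q 1 = vadd x h) by (unfold Q; vext).
  split.
  - split; [apply (proj1 (proj2 (proj2 (Hlin x Hx)))) |].
    intros u Hu. apply A; auto.
  - split.
    + destruct (Hlin x Hx) as [L1 _]. rewrite <- Q1.
      destruct (Hlin (Q 1) (HQ 1 ltac:(lra))) as [L2 _].
      intros a b s t. rewrite L1, L2. ring.
    + intros u Hu. rewrite <- Q1. rewrite <- Q0.
      destruct (MVT_cor2 (fun t => DF (Q t) u) (fun t => D2F (Q t) h u) 0 1 ltac:(lra))
        as [xi [e1 Hxi]].
      { intros c Hc. apply (deriv_line (fun w => DF w u) Q h c).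
        - intro s; unfold Q; vext.
        - apply D2; apply HQ; lra. }
      cbv beta in e1. assert (0 <= D2F (Q xi) h u) by (apply A; auto; apply HQ; lra).
      nra.
Qed.
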